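(* In any $\delta$-ring $A$, for every $n\ge1$ and $f\in A$, \[ \delta_n(f)=\sum_{k=0}^{n-1}\theta_{n-k}(\delta_k(f)). \]
   Context: A $\delta$-ring is a commutative ring with $\delta$ such that $\phi(x)=x^p+p\delta(x)$ is a ring endomorphism. The operations $\delta_k$ are the Witt components of the map $A\to W(A)$ encoding the $\delta$-structure, characterized by $\phi^n(f)=\sum_{k=0}^np^k\delta_k(f)^{p^{n-k}}$ for all $n$ (so $\delta_0=\mathrm{id}$, $\delta_1=\delta$). The operations $\theta_n$ ($n\ge1$) are the natural operations characterized by $\phi(f^{p^{n-1}})=f^{p^n}+p^n\theta_n(f)$. *)

(* Defs.v *)
From HB Require Import structures.
From mathcomp Require Import all_boot all_order all_algebra.
Set Implicit Arguments. Unset Strict Implicit. Unset Printing Implicit Defensive.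
Import GRing.Theory.
Local Open Scope ring_scope.

(* These say exactly that phi(x) = x^p + p delta(x) is a ring endomorphism
   "universally" (i.e. with the division by p performed in Z). *)
Record deltaRing (p : nat) := DeltaRing {
  dcarrier :> comPzRingType;
  delta : dcarrier -> dcarrier;
  delta0 : delta 0 = 0;
  delta1 : delta 1 = 0;
  deltaM : forall x y : dcarrier,
    delta (x * y) = x ^+ p * delta y + y ^+ p * delta x + p%:R * delta x * delta y;
  deltaD : forall x y : dcarrier,
    delta (x + y) = delta x + delta y
      - \sum_(1 <= i < p) ('C(p, i) %/ p)%:R * x ^+ i * y ^+ (p - i)
}.

Arguments delta {p} d _.

Definition phi (p : nat) (A : deltaRing p) (x : A) : A := x ^+ p + p%:R * delta A x.

Definition delta_hom (p : nat) (A B : deltaRing p) (g : {rmorphism A -> B}) : Prop :=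
  forall a : A, g (delta A a) = delta B (g a).

Definition natural_op (p : nat) (F : forall A : deltaRing p, A -> A) : Prop :=
  forall (A B : deltaRing p) (g : {rmorphism A -> B}), delta_hom g ->
    forall a : A, g (F A a) = F B (g a).

Definition witt_components (p : nat) (D : nat -> forall A : deltaRing p, A -> A) : Prop :=
  (forall k, natural_op (D k)) /\
  forall (A : deltaRing p) (n : nat) (f : A),
    iter n (@phi p A) f = \sum_(k < n.+1) (p ^ k)%:R * (D k A f) ^+ (p ^ (n - k)).

(* theta_n (n >= 1): characterized by phi(f^(p^(n-1))) = f^(p^n) + p^n theta_n(f).
   (The value at index 0 is irrelevant and unconstrained.) *)
Definition theta_ops (p : nat) (T : nat -> forall A : deltaRing p, A -> A) : Prop :=
  (forall n, (0 < n)%N -> natural_op (T n)) /\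
  forall (A : deltaRing p) (n : nat) (f : A), (0 < n)%N ->
    phi (f ^+ (p ^ n.-1)) = f ^+ (p ^ n) + (p ^ n)%:R * T n A f.

(* Main.v *)
Require Import Defs.
From mathcomp Require Import all_boot all_order all_algebra.
From HB Require Import structures.
From mathcomp Require Import finmap.
From mathcomp.multinomials Require Import monalg.
Set Implicit Arguments. Unset Strict Implicit. Unset Printing Implicit Defensive.
Import GRing.Theory.
Local Open Scope ring_scope.
From mathcomp Require Import ring.
Section Steps.
Variables (S : comPzRingType) (p : nat).
Lemma stepN (x Y C c : S) : 0 = x ^+ p + Y + p%:R * C ->
  - (x ^+ p + p%:R * c) - Y = p%:R * (C - c).
Proof. move=> H; have E : Y = (x ^+ p + Y + p%:R * C) - x ^+ p - p%:R * C by ring.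
by rewrite E -H; ring. Qed.
Lemma stepD (x y cx cy C Z : S) : Z = x ^+ p + y ^+ p + p%:R * C ->
  x ^+ p + p%:R * cx + (y ^+ p + p%:R * cy) - Z = p%:R * (cx + cy - C).
Proof. by move=> ->; ring. Qed.
Lemma stepM (x y cx cy : S) :
  (x ^+ p + p%:R * cx) * (y ^+ p + p%:R * cy) - (x * y) ^+ p
   = p%:R * (cx * y ^+ p + x ^+ p * cy + p%:R * cx * cy).
Proof. by rewrite exprMn; ring. Qed.
Lemma stepDM (x y dx dy dxy : S) :
  (x ^+ p + p%:R * dx) * (y ^+ p + p%:R * dy) = (x * y) ^+ p + p%:R * dxy ->
  p%:R * dxy = p%:R * (x ^+ p * dy + y ^+ p * dx + p%:R * dx * dy).
Proof.
rewrite exprMn => H.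
have E : p%:R * dxy = (x ^+ p * y ^+ p + p%:R * dxy) - x ^+ p * y ^+ p by ring.
by rewrite E -H; ring.
Qed.
Lemma stepDD (x y dx dy dxy C : S) :
  (x + y) ^+ p = x ^+ p + y ^+ p + p%:R * C ->
  x ^+ p + p%:R * dx + (y ^+ p + p%:R * dy) = (x + y) ^+ p + p%:R * dxy ->
  p%:R * dxy = p%:R * (dx + dy - C).
Proof.
move=> -> H.
have E : p%:R * dxy = (x ^+ p + y ^+ p + p%:R * C + p%:R * dxy) - (x ^+ p + y ^+ p + p%:R * C) by ring.
by rewrite E -H; ring.
Qed.
Lemma stepI (a b c : S) : a + b = a + c -> b = c.
Proof. exact: addrI. Qed.
End Steps.

Definition cs (p : nat) (S : comPzRingType) (x y : S) : S :=
  \sum_(1 <= i < p) ('C(p, i) %/ p)%:R * x ^+ i * y ^+ (p - i).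

Lemma binom_p (p : nat) (S : comPzRingType) (x y : S) : prime p ->
  (x + y) ^+ p = x ^+ p + y ^+ p + p%:R * cs p x y.
Proof.
move=> pp; have p1 : (0 < p)%N by apply: prime_gt0.
rewrite addrC exprDn -(big_mkord xpredT (fun i => y ^+ (p - i) * x ^+ i *+ 'C(p, i))).
rewrite big_nat_recr //= big_ltn //= subnn subn0 bin0 binn !expr0 mulr1 mul1r.
rewrite !mulr1n addrAC [y ^+ p + _]addrC; congr (_ + _).
rewrite /cs big_distrr /=; apply: eq_big_nat => i /andP[i1 ip].
have dv : (p %| 'C(p, i))%N by apply: prime_dvd_bin => //; rewrite i1 ip.
rewrite -mulr_natl -{1}(divnK dv) natrM [_ * p%:R]mulrC -!mulrA.
by congr (_ * (_ * _)); rewrite mulrC.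
Qed.

Lemma binomN (p : nat) (S : comPzRingType) (x : S) : prime p ->
  0 = x ^+ p + (- x) ^+ p + p%:R * cs p x (- x).
Proof.
move=> pp; rewrite -binom_p // subrr expr0n eqn0Ngt prime_gt0 //.
Qed.

Lemma deltaN (p : nat) (A : deltaRing p) (x : A) :
  delta A (- x) = cs p x (- x) - delta A x.
Proof.
have := deltaD x (- x); rewrite subrr delta0 -/(cs p x (-x)) => H.
set c := cs p x (-x) in H *.
transitivity ((delta A x + delta A (-x) - c) + c - delta A x).
  by rewrite subrK [delta A x + _]addrC addrK.
by rewrite -H add0r.
Qed.
Section Mev.
Variables (S : comNzRingType) (v : nat -> S).
Definition mev (m : cmonom nat) : S := \prod_(i <- finsupp m) v i ^+ m i.

Lemma mevW (d : {fset nat}) (m : cmonom nat) : (finsupp m `<=` d)%fset ->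
  mev m = \prod_(i <- d) v i ^+ m i.
Proof.
move=> sub; rewrite /mev (big_fset_incl _ sub) //.
by move=> x _ /negPf; rewrite -cmE_neq0 => /negbFE/eqP ->.
Qed.

Lemma mev_mmorph : mmorphism mev.
Proof.
split.
  move=> m1 m2 /=.
  rewrite (mevW (fsubsetUl (finsupp m1) (finsupp m2))).
  rewrite (mevW (fsubsetUr (finsupp m1) (finsupp m2))).
  rewrite /mev mdomD -big_split /=; apply: eq_bigr => i _.
  by rewrite cmM exprD.
by rewrite /mev mdom1 big_seq_fset0.
Qed.

HB.instance Definition _ := isMultiplicative.Build _ _ mev mev_mmorph.
End Mev.

Notation B := {malg int[cmonom nat]}.
Definition X (i : nat) : B := << ucm i >>.
Notation ev v := (mmap (intr : int -> _) (mev v)).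

Lemma evX (S : comNzRingType) (v : nat -> S) i : ev v (X i) = v i.
Proof.
rewrite /X mmapU /mev mdomU big_seq_fset1 ucmE eqxx /=.
by rewrite mulr1z mul1r expr1.
Qed.

Lemma monM (m1 m2 : cmonom nat) : (<< mmul m1 m2 >> : B) = << m1 >> * << m2 >>.
Proof. by rewrite malgM_def fgmulUU mulr1. Qed.

Lemma B_ind (P : B -> Prop) :
  P 1 -> (forall x, P x -> P (- x)) -> (forall x y, P x -> P y -> P (x + y)) ->
  (forall x y, P x -> P y -> P (x * y)) -> (forall i, P (X i)) -> forall b, P b.
Proof.
move=> P1 PN PD PM PX.
have P0 : P 0 by rewrite -(subrr (1 : B)); apply: PD => //; apply: PN.
have Pn : forall n : nat, P n%:R.
  by elim=> [|n IH] //; rewrite mulrS; apply: PD.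
have Pz : forall c : int, P c%:~R.
  by case=> n; [rewrite -pmulrn | rewrite NegzE mulrNz; apply: PN]; apply: Pn.
have Pm : forall m : cmonom nat, P << m >>.
  move=> m; move: {2}(mdeg m) (erefl (mdeg m)) => k.
  elim: k m => [|k IH] m Hm.
    by move/mdeg_eq0I: Hm => ->.
  have : finsupp m != fset0.
    apply/negP => /eqP H; move: Hm; rewrite mdegE H big_seq_fset0 //.
  case/fset0Pn => i; rewrite -cmE_neq0 => mi.
  have Em : m = mmul (ucm i) (divcm m (ucm i)).
    apply/eqP/cmP => j; rewrite cmM !ucmE divcmE.
    case: eqVneq => [<-|ne]; last by rewrite ucmE (negPf ne) subn0.
    by rewrite ucmE eqxx add1n subn1 prednK // lt0n.
  rewrite Em monM; apply: PM; first exact: PX.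
  apply: IH; move: Hm; rewrite {1}Em mdegM mdegU add1n.
  by case.
move=> b; rewrite (monalgE b); apply: (big_ind P P0 PD) => m _.
have -> : << b@_m *g m >> = (b@_m)%:MP * << m >>.
  by rewrite malgM_def fgmulUU mulr1 monalg.mul1m.
apply: PM; last exact: Pm.
have -> : (b@_m)%:MP = (b@_m)%:~R :> B.
  by move: (b@_m) => c; rewrite -{1}(intz c) rmorph_int.
exact: Pz.
Qed.

Lemma tfB (N : nat) (x y : B) : (0 < N)%N -> N%:R * x = N%:R * y -> x = y.
Proof.
move=> N0 H; apply/malgP => m; have := congr1 (mcoeff m) H.
rewrite -mpolyC_nat.
have E := (@mcoeffCM (cmonom nat) int (N%:R) x m). 
have E2 := (@mcoeffCM (cmonom nat) int (N%:R) y m).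
move=> H2.
have H3 : (N%:R : int) * x@_m = N%:R * y@_m by rewrite -E -E2.
have NZ : (N%:R : int) != 0 by rewrite Num.Theory.pnatr_eq0 -lt0n.
exact: (mulfI NZ H3).
Qed.


Section BDelta.
Variables (p : nat) (pp : prime p).
Definition Yv (i : nat) : B := X i ^+ p + p%:R * X i.+1.
Local Notation phiB := (ev Yv).
Let p0 : (0 < p)%N := prime_gt0 pp.

Lemma divB (b : B) : exists c, phiB b - b ^+ p == p%:R * c.
Proof.
suff [c Hc] : exists c, phiB b - b ^+ p = p%:R * c by exists c; apply/eqP.
elim/B_ind: b.
- by exists 0; rewrite rmorph1 expr1n subrr mulr0.
- move=> x [c Hc]; exists (cs p x (- x) - c).
  have Ex : phiB x = x ^+ p + p%:R * c by rewrite -Hc; ring.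
  have H0 := binomN x pp; rewrite rmorphN /= Ex.
  exact: stepN.
- move=> x y [cx Hx] [cy Hy]; exists (cx + cy - cs p x y).
  have Ex : phiB x = x ^+ p + p%:R * cx by rewrite -Hx; ring.
  have Ey : phiB y = y ^+ p + p%:R * cy by rewrite -Hy; ring.
  have H := binom_p x y pp; rewrite rmorphD /= Ex Ey.
  exact: stepD.
- move=> x y [cx Hx] [cy Hy]; exists (cx * y ^+ p + x ^+ p * cy + p%:R * cx * cy).
  have Ex : phiB x = x ^+ p + p%:R * cx by rewrite -Hx; ring.
  have Ey : phiB y = y ^+ p + p%:R * cy by rewrite -Hy; ring.
  rewrite rmorphM /= Ex Ey.
  exact: stepM.
- by move=> i; exists (X i.+1); rewrite evX /Yv addrAC subrr add0r.
Qed.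

Definition dB (b : B) : B := xchoose (divB b).

Lemma dB_spec b : phiB b = b ^+ p + p%:R * dB b.
Proof. by have /eqP H := xchooseP (divB b); rewrite -/(dB b) -H; ring. Qed.

Lemma dB0 : dB 0 = 0.
Proof.
apply: (tfB p0); rewrite mulr0.
have H := dB_spec 0; rewrite rmorph0 expr0n eqn0Ngt p0 /= add0r in H.
by rewrite -H.
Qed.

Lemma dB1 : dB 1 = 0.
Proof.
apply: (tfB p0); rewrite mulr0.
have H := dB_spec 1; rewrite rmorph1 expr1n in H.
by apply: (@stepI _ 1); rewrite -H addr0.
Qed.

Lemma dBM (x y : B) :
  dB (x * y) = x ^+ p * dB y + y ^+ p * dB x + p%:R * dB x * dB y.
Proof.
apply: (tfB p0).
have H := dB_spec (x * y); rewrite rmorphM /= (dB_spec x) (dB_spec y) in H.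
exact: (stepDM H).
Qed.

Lemma dBD (x y : B) :
  dB (x + y) = dB x + dB y
      - \sum_(1 <= i < p) ('C(p, i) %/ p)%:R * x ^+ i * y ^+ (p - i).
Proof.
rewrite -/(cs p x y); apply: (tfB p0).
have H := dB_spec (x + y); rewrite rmorphD /= (dB_spec x) (dB_spec y) in H.
exact: (stepDD (binom_p x y pp) H).
Qed.

Definition BR : deltaRing p := @DeltaRing p B dB dB0 dB1 dBM dBD.

Lemma phiBR (z : BR) : phi z = phiB z.
Proof. by rewrite dB_spec. Qed.

Lemma dBX i : dB (X i) = X i.+1.
Proof.
apply: (tfB p0).
have H := dB_spec (X i); rewrite evX /Yv in H.
exact: (stepI (esym H)).
Qed.
End BDelta.

Lemma key (p : nat) (pp : prime p) (D T : nat -> forall A : deltaRing p, A -> A)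
  (Dw : forall (A : deltaRing p) (n : nat) (f : A),
    iter n (@phi p A) f = \sum_(k < n.+1) (p ^ k)%:R * (D k A f) ^+ (p ^ (n - k)))
  (Tw : forall (A : deltaRing p) (n : nat) (f : A), (0 < n)%N ->
    phi (f ^+ (p ^ n.-1)) = f ^+ (p ^ n) + (p ^ n)%:R * T n A f)
  (R : deltaRing p) (phiR : {rmorphism R -> R}) (Hphi : forall z : R, phi z = phiR z)
  (tf : forall N (x y : R), (0 < N)%N -> N%:R * x = N%:R * y -> x = y)
  (n : nat) (b : R) : (1 <= n)%N ->
  D n R b = \sum_(k < n) T (n - k)%N R (D k R b).
Proof.
case: n => [//|n] _.
apply: (tf (p ^ n.+1)%N); first by rewrite expn_gt0 prime_gt0.
have W1 := Dw R n.+1 b; have W0 := Dw R n b.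
rewrite iterS Hphi W0 rmorph_sum [in RHS]big_ord_recr /= subnn expn0 expr1 in W1.
have E : forall k : 'I_n.+1, phiR ((p ^ k)%:R * D k R b ^+ (p ^ (n - k))) =
    (p ^ k)%:R * D k R b ^+ (p ^ (n.+1 - k)) + (p ^ n.+1)%:R * T (n.+1 - k)%N R (D k R b).
  move=> k; have kn : (k <= n)%N by rewrite -ltnS.
  rewrite rmorphM rmorph_nat -Hphi.
  have T1 := Tw R (n.+1 - k)%N (D k R b); rewrite subn_gt0 ltnS kn subSn //= in T1.
  rewrite subSn // T1 //.
  by rewrite mulrDr mulrA -natrM -expnD addnS subnKC.
move: W1; rewrite (eq_bigr _ (fun k _ => E k)) big_split /= => W1.
have W2 := addrI _ W1.
rewrite mulr_sumr -W2; apply: eq_bigr => k _ /=.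
by [].
Qed.

Section Hom.
Variables (p : nat) (pp : prime p) (R S : deltaRing p) (g : {rmorphism R -> S}).

Lemma g_cs (x y : R) : g (cs p x y) = cs p (g x) (g y).
Proof.
rewrite /cs rmorph_sum; apply: eq_bigr => i _.
by rewrite !rmorphM rmorph_nat !rmorphXn.
Qed.

Lemma dh1 : g (delta R 1) = delta S (g 1).
Proof. by rewrite delta1 rmorph1 rmorph0 delta1. Qed.

Lemma dhN x : g (delta R x) = delta S (g x) -> g (delta R (- x)) = delta S (g (- x)).
Proof. by move=> H; rewrite deltaN rmorphN deltaN rmorphB g_cs rmorphN H. Qed.

Lemma dhD x y : g (delta R x) = delta S (g x) -> g (delta R y) = delta S (g y) ->
  g (delta R (x + y)) = delta S (g (x + y)).
Proof.
move=> Hx Hy; rewrite rmorphD !deltaD.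
by rewrite rmorphB rmorphD -/(cs p x y) g_cs Hx Hy.
Qed.

Lemma dhM x y : g (delta R x) = delta S (g x) -> g (delta R y) = delta S (g y) ->
  g (delta R (x * y)) = delta S (g (x * y)).
Proof.
move=> Hx Hy; rewrite rmorphM !deltaM.
by rewrite !rmorphD !rmorphM !rmorphXn rmorph_nat Hx Hy.
Qed.
End Hom.

Section NZ.
Variables (R : comPzRingType) (H : (1 : R) != 0).
Definition nzc : Type := R.
HB.instance Definition _ := GRing.ComPzRing.on nzc.
HB.instance Definition _ := GRing.PzSemiRing_isNonZero.Build nzc H.
Variable v : nat -> R.
Definition evR : B -> R := mmap (intr : int -> nzc) (mev (v : nat -> nzc)).
Lemma evR_nmod : nmod_morphism evR.
Proof.
split; first exact: (rmorph0 (mmap (intr : int -> nzc) (mev (v : nat -> nzc)))).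
exact: (rmorphD (mmap (intr : int -> nzc) (mev (v : nat -> nzc)))).
Qed.
Lemma evR_mon : monoid_morphism evR.
Proof.
split; first exact: (rmorph1 (mmap (intr : int -> nzc) (mev (v : nat -> nzc)))).
exact: (rmorphM (mmap (intr : int -> nzc) (mev (v : nat -> nzc)))).
Qed.
HB.instance Definition _ := GRing.isNmodMorphism.Build B R evR evR_nmod.
HB.instance Definition _ := GRing.isMonoidMorphism.Build B R evR evR_mon.
Lemma evRX i : evR (X i) = v i.
Proof. exact: (evX (v : nat -> nzc) i). Qed.
End NZ.

Unset Implicit Arguments.
Set Strict Implicit.

Theorem lemma4p15 (p : nat) (p_prime : prime p)
  (D T : nat -> forall A : deltaRing p, A -> A) :
  witt_components D -> theta_ops T ->
  forall (A : deltaRing p) (n : nat) (f : A), (1 <= n)%N ->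
    D n A f = \sum_(k < n) T (n - k)%N A (D k A f).
Proof.
move=> [Dnat Dw] [Tnat Tw] A n f n1.
have [H1|H1] := eqVneq (1 : A) 0.
  have z : forall a : A, a = 0 by move=> a; rewrite -[a]mulr1 H1 mulr0.
  by transitivity (0 : A); [exact: z | symmetry; exact: z].
pose v := fun i => iter i (delta A) f.
pose g : {rmorphism BR p_prime -> A} := evR H1 v.
have gX : forall i, g (X i) = v i := fun i => evRX H1 v i.
have dh : delta_hom g.
  move=> a; elim/B_ind: a.
  - exact: dh1.
  - by move=> x; apply: dhN.
  - by move=> x y; apply: dhD.
  - by move=> x y; apply: dhM.
  - move=> i.
    have E : delta (BR p_prime) (X i) = X i.+1 := dBX p_prime i.
    apply: (etrans (congr1 g E)); apply: (etrans (gX _)).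
    apply: esym; apply: (etrans (congr1 (delta A) (gX _))).
    by [].
have gb : g (X 0) = f := gX 0.
pose phR : {rmorphism BR p_prime -> BR p_prime} := ev (Yv p).
have K := @key p p_prime D T Dw Tw (BR p_prime) phR (@phiBR p p_prime) (@tfB) n (X 0) n1.
apply: (etrans (esym (congr1 (D n A) gb))).
apply: (etrans (esym (Dnat n _ _ g dh (X 0)))).
apply: (etrans (congr1 g K)).
apply: (etrans (rmorph_sum g _ _ _)); apply: eq_bigr => k _.
have kpos : (0 < n - k)%N by rewrite subn_gt0.
apply: (etrans (Tnat _ kpos _ _ g dh _)); apply: congr1.
apply: (etrans (Dnat k _ _ g dh _)); exact: (congr1 (D k A) gb).
Qed.
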